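(* Let $m\ge2$, $k\ge2$, $n\ge1$, $\mathcal{A}=(a_{i_1i_2\cdots i_m})\in\mathbb{C}^{[m,n]}$ and $\mathcal{B}=(b_{i_1i_2\cdots i_k})\in\mathbb{C}^{[k,n]}$. For $i\in[n]$ let $c_{i\cdots i}=\sum_{i_2,\ldots,i_m=1}^n a_{ii_2\cdots i_m}b_{i_2i\cdots i}\cdots b_{i_mi\cdots i}$ (the diagonal entries of $\mathcal{A}\mathcal{B}$). Then \[\sigma(\mathcal{A}\mathcal{B})\subseteq\mathbf{G}=\bigcup_{i\in[n]}\{z\in\mathbb{C}:|z-c_{i\cdots i}|\le r_i(\mathcal{A})(R(\mathcal{B}))^{m-1}-|c_{i\cdots i}|\}.\]
   Context: $[n]=\{1,\ldots,n\}$. $\mathbb{C}^{[m,n]}$ denotes the set of order $m$, dimension $n$ complex tensors. For a tensor $\mathcal{T}=(t_{i_1\cdots i_p})$ of order $p$ and dimension $n$: $r_i(\mathcal{T})=\sum_{i_2,\ldots,i_p=1}^n|t_{ii_2\cdots i_p}|$, $R(\mathcal{T})=\max_{i\in[n]}r_i(\mathcal{T})$. General product: $\mathcal{A}\mathcal{B}=(c_{i\alpha_1\cdots\alpha_{m-1}})$ is the order $(m-1)(k-1)+1$, dimension $n$ tensor with $c_{i\alpha_1\cdots\alpha_{m-1}}=\sum_{i_2,\ldots,i_m=1}^n a_{ii_2\cdots i_m}b_{i_2\alpha_1}\cdots b_{i_m\alpha_{m-1}}$, $i\in[n]$, $\alpha_j\in[n]^{k-1}$ (where $b_{j\alpha}$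 with $\alpha=(j_2,\ldots,j_k)$ means $b_{jj_2\cdots j_k}$). Eigenvalues of a tensor $\mathcal{T}$ of order $p\ge2$: $\lambda\in\mathbb{C}$ such that there is a nonzero $x\in\mathbb{C}^n$ with $\sum_{i_2,\ldots,i_p=1}^n t_{ii_2\cdots i_p}x_{i_2}\cdots x_{i_p}=\lambda x_i^{p-1}$ for all $i\in[n]$; $\sigma(\mathcal{T})$ is the set of eigenvalues of $\mathcal{T}$. *)

(* Defs.v *)
From HB Require Import structures.
From mathcomp Require Import all_boot all_order all_algebra.
Set Implicit Arguments. Unset Strict Implicit. Unset Printing Implicit Defensive.
Import Order.TTheory GRing.Theory Num.Theory.
Local Open Scope ring_scope.

(* A tensor of order p and dimension n with entries in C.  An entry
   t_{i i_2 ... i_p} is  T i a  where a : {ffun 'I_p.-1 -> 'I_n} is the tail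
   index (i_2,...,i_p), i.e. a j = i_{j+2}. *)
Definition tensor (C : Type) (p n : nat) := 'I_n -> {ffun 'I_p.-1 -> 'I_n} -> C.

Section Tensors.
Variable C : numClosedFieldType.

Definition trow {p n : nat} (T : tensor C p n) (i : 'I_n) : C :=
  \sum_(a : {ffun 'I_p.-1 -> 'I_n}) `|T i a|.

Definition tRmax {p n : nat} (T : tensor C p n) : C :=
  \big[Num.max/0]_(i < n) trow T i.

(* General product AB, of order (m-1)(k-1)+1.  Its tail index
   beta : 'I_((m-1)(k-1)) -> 'I_n is split into the m-1 blocks
   alpha_j (j < m-1), alpha_j l = beta (mxvec_index j l), each of length k-1. *)
Definition tprod {m k n : nat} (A : tensor C m n) (B : tensor C k n)
  : tensor C (m.-1 * k.-1).+1 n :=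
  fun i beta =>
    \sum_(g : {ffun 'I_m.-1 -> 'I_n})
       A i g * \prod_(j < m.-1) B (g j) [ffun l => beta (mxvec_index j l)].

Definition teigenvalue {p n : nat} (T : tensor C p n) (lambda : C) : Prop :=
  exists x : {ffun 'I_n -> C}, x != 0 /\
    forall i : 'I_n,
      \sum_(a : {ffun 'I_p.-1 -> 'I_n}) T i a * \prod_(j < p.-1) x (a j)
      = lambda * x i ^+ p.-1.

End Tensors.

(* Main.v *)
Require Import Defs.
From HB Require Import structures.
From mathcomp Require Import all_boot all_order all_algebra.
Import Order.TTheory GRing.Theory Num.Theory.
Local Open Scope ring_scope.

Section H.
Variable C : numClosedFieldType.

Lemma bigmax_ub (I : eqType) (s : seq I) (F : I -> C) :
  (forall i, 0 <= F i) ->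
  0 <= \big[Num.max/0]_(i <- s) F i /\
  forall j, j \in s -> F j <= \big[Num.max/0]_(i <- s) F i.
Proof.
move=> F0; elim: s => [|a s [IH1 IH2]]; first by rewrite big_nil.
rewrite big_cons.
have cmp : F a >=< \big[Num.max/0]_(i <- s) F i.
  by apply: real_comparable; apply: ger0_real.
split; first by rewrite comparable_le_max // F0.
move=> j; rewrite in_cons => /orP[/eqP->|js].
  by rewrite comparable_le_max // lexx.
by rewrite comparable_le_max // IH2 // orbT.
Qed.

Lemma ex_max (I : eqType) (s : seq I) (F : I -> C) :
  s != [::] -> (forall i, F i \is Num.real) ->
  exists2 i, i \in s & forall j, j \in s -> F j <= F i.
Proof.
move=> + Fr; elim: s => [//|a s IH] _.
case: (altP (s =P [::])) => [->|sn].
  by exists a; rewrite ?mem_head // => j; rewrite inE => /eqP->.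
have [i is' Hi] := IH sn.
have /orP[le|le] := real_leVge (Fr a) (Fr i).
  exists i; first by rewrite inE is' orbT.
  by move=> j; rewrite inE => /orP[/eqP->//|]; apply: Hi.
exists a; first by rewrite mem_head.
move=> j; rewrite inE => /orP[/eqP->//|js]; exact: le_trans (Hi _ js) le.
Qed.

Lemma reshape_bij (p q n : nat) :
  bijective (fun beta : {ffun 'I_(p * q) -> 'I_n} =>
     [ffun j : 'I_p => [ffun l : 'I_q => beta (mxvec_index j l)]]).
Proof.
exists (fun f : {ffun 'I_p -> {ffun 'I_q -> 'I_n}} =>
   [ffun t => mxvec (\matrix_(j, l) f j l) 0 t]).
  move=> beta; apply/ffunP => t; rewrite ffunE.
  have -> : (\matrix_(j, l) [ffun j0 : 'I_p => [ffun l0 : 'I_q => beta (mxvec_index j0 l0)]] j l)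
     = vec_mx (\row_t beta t).
    by apply/matrixP => j l; rewrite !mxE !ffunE.
  by rewrite (@vec_mxK _ p q (\row_t0 beta t0)) mxE.
move=> f; apply/ffunP => j; apply/ffunP => l; rewrite !ffunE.
by rewrite (@mxvecE _ p q (\matrix_(j0, l0) f j0 l0)) mxE.
Qed.


Lemma trow_ge0 p n (T : tensor C p n) i : 0 <= trow T i.
Proof. by apply: sumr_ge0 => a _; apply: normr_ge0. Qed.

Lemma trow_le_R p n (T : tensor C p n) i : trow T i <= tRmax T.
Proof.
have [_ H] := @bigmax_ub _ (index_enum 'I_n) (trow T) (@trow_ge0 p n T).
by apply: H; rewrite mem_index_enum.
Qed.

Lemma key m k n (A : tensor C m n) (B : tensor C k n) i :
  \sum_(a : {ffun 'I_(m.-1 * k.-1) -> 'I_n}) `|tprod A B i a|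
    <= trow A i * tRmax B ^+ m.-1.
Proof.
rewrite /tprod.
apply: le_trans (ler_sum _ (fun a _ => ler_norm_sum _ _ _)) _.
rewrite exchange_big /= /trow mulr_suml; apply: ler_sum => g _.
under eq_bigr do rewrite normrM normr_prod.
rewrite -mulr_sumr; apply: ler_wpM2l; first exact: normr_ge0.
have -> : \sum_(beta : {ffun 'I_(m.-1 * k.-1) -> 'I_n})
     \prod_(j < m.-1) `|B (g j) [ffun l => beta (mxvec_index j l)]|
   = \prod_(j < m.-1) trow B (g j).
  rewrite /trow bigA_distr_bigA (reindex _ (onW_bij _ (@reshape_bij m.-1 k.-1 n))) /=.
  by apply: eq_bigr => beta _; apply: eq_bigr => j _; rewrite ffunE.
rewrite -[X in _ <= _ ^+ X](card_ord m.-1) -prodr_const.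
apply: ler_prod => j _; rewrite trow_ge0; exact: trow_le_R.
Qed.

End H.
Theorem theorem4p3 (C : numClosedFieldType) (m k n : nat)
  (hm : (2 <= m)%N) (hk : (2 <= k)%N) (hn : (1 <= n)%N)
  (A : tensor C m n) (B : tensor C k n) (lambda : C) :
  teigenvalue (tprod A B) lambda ->
  exists i : 'I_n,
    `|lambda - tprod A B i [ffun => i]|
      <= trow A i * tRmax B ^+ m.-1 - `|tprod A B i [ffun => i]|.
Proof.
case=> x [x0 Hx].
have sn : enum 'I_n != [::] by rewrite -size_eq0 size_enum_ord -lt0n.
have [i _ Hi] := @ex_max C _ (enum 'I_n) (fun j => `|x j|) sn (fun j => normr_real _).
exists i.
have [j xj] : exists j, x j != 0.
  case: (pickP (fun j => x j != 0)) => [j xj|H]; first by exists j.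
  exfalso; move/eqP: x0; apply; apply/ffunP => j; rewrite ffunE.
  by move: (H j) => /negbFE/eqP.
have Mpos : 0 < `|x i|.
  by apply: (lt_le_trans _ (Hi j (mem_enum _ _))); rewrite normr_gt0.
set T := tprod A B.
set d : {ffun 'I_(m.-1 * k.-1) -> 'I_n} := [ffun => i].
have E := Hx i; rewrite /= (bigD1 d) //= in E.
have Pd : \prod_(j0 < m.-1 * k.-1) x (d j0) = x i ^+ (m.-1 * k.-1).
  by under eq_bigr do rewrite ffunE; rewrite prodr_const card_ord.
rewrite Pd in E.
set rest := \sum_(a | a != d) _ in E.
have E2 : (lambda - T i d) * x i ^+ (m.-1 * k.-1) = rest.
  by rewrite mulrBl -E /T addrAC subrr add0r.
have B1 : `|lambda - T i d| <= \sum_(a | a != d) `|T i a|.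
  rewrite -(ler_pM2r (exprn_gt0 (m.-1 * k.-1) Mpos)) -normrX -normrM E2.
  apply: le_trans (ler_norm_sum _ _ _) _.
  rewrite mulr_suml; apply: ler_sum => a _.
  rewrite normrM normr_prod; apply: ler_wpM2l; first exact: normr_ge0.
  rewrite normrX -[X in _ <= _ ^+ X](card_ord (m.-1 * k.-1)) -prodr_const.
  apply: ler_prod => j0 _; rewrite normr_ge0; apply: Hi; exact: mem_enum.
have K := @key C m k n A B i; rewrite (bigD1 d) //= in K.
rewrite lerBrDr; apply: le_trans K; rewrite /T [X in X <= _]addrC lerD2l; exact: B1.
Qed.
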